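(* Let $\alpha > 5/6$ and $c > 0$ be fixed constants, and let $p = n^{-\alpha}$. Let $G \sim G(n,p)$. Then the probability that every set of at most $c\sqrt{n}$ vertices of $G$ induces a $3$-colorable subgraph of $G$ tends to $1$ as $n \to \infty$.
   Context: $G(n,p)$ denotes the random graph on $n$ labelled vertices in which each of the $\binom{n}{2}$ pairs of vertices is an edge independently with probability $p$. A graph is $3$-colorable if its vertices can be colored with $3$ colors so that no two adjacent vertices receive the same color. *)

(* Defs.v *)
From HB Require Import structures.
From mathcomp Require Import all_boot all_order all_algebra.
From mathcomp Require Import all_classical all_reals all_analysis.
Set Implicit Arguments. Unset Strict Implicit. Unset Printing Implicit Defensive.
Import Order.TTheory GRing.Theory Num.Theory.
Local Open Scope ring_scope.

Definition pairs (n : nat) : {set {set 'I_n}} := [set e : {set 'I_n} | #|e| == 2%N].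

(* A (labelled simple) graph on 'I_n is an edge set E \subset pairs n. *)

(* Probability, in G(n,p), of the graph property P (a predicate on edge sets):
   each pair is an edge independently with probability p. *)
Definition gnp_prob (R : realType) (n : nat) (p : R)
    (P : {set {set 'I_n}} -> bool) : R :=
  \sum_(E in powerset (pairs n) | P E)
     p ^+ #|E| * (1 - p) ^+ (#|pairs n| - #|E|).

Definition induced_3colorable (n : nat) (E : {set {set 'I_n}}) (S : {set 'I_n}) : bool :=
  [exists f : {ffun 'I_n -> 'I_3},
     [forall u in S, forall v in S, ([set u; v] \in E) ==> (f u != f v)]].

Definition small_sets_3colorable (R : realType) (c : R) (n : nat)
    (E : {set {set 'I_n}}) : bool :=
  [forall S : {set 'I_n},
     ((#|S|%:R : R) <= c * Num.sqrt (n%:R)) ==> induced_3colorable E S].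

(* Main.v *)
Require Import Defs.
From HB Require Import structures.
From mathcomp Require Import all_boot all_order all_algebra.
From mathcomp Require Import all_classical all_reals all_analysis.
Import Order.TTheory GRing.Theory Num.Theory.
Import numFieldNormedType.Exports.
Local Open Scope classical_set_scope.
Local Open Scope ring_scope.
From mathcomp Require Import ring lra zify.
From mathcomp Require Import fintype finset bigop.
Local Close Scope classical_set_scope.
Set Implicit Arguments. Unset Strict Implicit. Unset Printing Implicit Defensive.
Section L.
Variable (R : comPzRingType) (T : finType).
Lemma sum_powerset_prod (A : {set T}) (f g : T -> R) :
  \sum_(E in powerset A) \prod_(e in A) (if e \in E then f e else g e)
  = \prod_(e in A) (f e + g e).
Proof.
have -> : \prod_(e in A) (f e + g e) =
   \prod_(e in A) \sum_(b : bool) (if b then f e else g e).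
  by apply: eq_bigr => e _; rewrite big_bool /= addrC.
rewrite (big_distr_big false) /=.
rewrite (reindex (fun phi : {ffun T -> bool} => [set i | phi i])) /=; last first.
  exists (fun E : {set T} => [ffun i => i \in E]) => [phi _|E _].
    by apply/ffunP => i; rewrite ffunE inE.
  by apply/setP => i; rewrite inE ffunE.
apply: eq_big => [phi|phi _].
  rewrite powersetE; apply/idP/idP => [/fintype.subsetP H|/pffun_onP [H1 _]].
    apply/pffun_onP; split => //; apply/fintype.subsetP => i; rewrite inE => Hi; apply: H.
    by rewrite inE; case: (phi i) Hi.
  apply/fintype.subsetP => i; rewrite inE => Hi; apply: (fintype.subsetP H1); by rewrite inE Hi.
by apply: eq_bigr => i _; rewrite inE.
Qed.
End L.

Section W.
Variable (R : comPzRingType) (T : finType).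
Lemma prod_if_in (A E : {set T}) (x y : R) : E \subset A ->
  \prod_(e in A) (if e \in E then x else y) = x ^+ #|E| * y ^+ (#|A| - #|E|).
Proof.
move=> EA.
rewrite (bigID (mem E)) /=.
have -> : \prod_(i in A | i \in E) (if i \in E then x else y) = \prod_(i in A :&: E) x.
  by apply: eq_big => [i|i /andP [_ ->]] //; rewrite finset.in_setI.
have -> : \prod_(i in A | i \notin E) (if i \in E then x else y) = \prod_(i in A :\: E) y.
  by apply: eq_big => [i|i /andP [_ /negbTE ->]] //; rewrite finset.in_setD andbC.
by rewrite !prodr_const cardsD (setIidPr EA).
Qed.

Lemma sumw1 (A : {set T}) (p : R) :
  \sum_(E in powerset A) p ^+ #|E| * (1 - p) ^+ (#|A| - #|E|) = 1.
Proof.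
transitivity (\sum_(E in powerset A) \prod_(e in A) (if e \in E then p else 1 - p)).
  by apply: eq_bigr => E; rewrite powersetE => EA; rewrite prod_if_in.
rewrite sum_powerset_prod.
by rewrite big1 // => e _; rewrite addrC subrK.
Qed.

Lemma sumwF (A F : {set T}) (p : R) : F \subset A ->
  \sum_(E in powerset A) p ^+ #|E| * (1 - p) ^+ (#|A| - #|E|) * (F \subset E)%:R
   = p ^+ #|F|.
Proof.
move=> FA.
transitivity (\sum_(E in powerset A) \prod_(e in A)
   (if e \in E then p else (if e \in F then 0 else 1 - p))).
  apply: eq_bigr => E; rewrite powersetE => EA; rewrite -prod_if_in //.
  have [FE|nFE] := boolP (F \subset E).
    rewrite mulr1; apply: eq_bigr => e _.
    case: ifP => // eE; case: ifP => // eF.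
    by move: eE; rewrite (fintype.subsetP FE).
  rewrite mulr0; apply/esym.
  have [e eF eE] : exists2 e, e \in F & e \notin E.
    by move/fintype.subsetPn: nFE => [e H1 H2]; exists e.
  rewrite (bigD1 e) /=; last by rewrite (fintype.subsetP FA).
  by rewrite (negbTE eE) eF mul0r.
rewrite sum_powerset_prod.
have := prod_if_in p 1 FA; rewrite expr1n mulr1 => <-.
by apply: eq_bigr => e _; case: ifP => _; rewrite ?addr0 // addrC subrK.
Qed.
End W.

Section Comb.
Variables (n : nat) (E : {set {set 'I_n}}).
Hypothesis Epairs : E \subset pairs n.

Definition inside (T : {set 'I_n}) := [set e in pairs n | e \subset T].

Lemma col0 : induced_3colorable E set0.
Proof.
apply/existsP; exists [ffun=> ord0]; apply/forall_inP => u; by rewrite inE.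
Qed.

Lemma E2 e : e \in E -> #|e| = 2%N.
Proof. by move/(fintype.subsetP Epairs); rewrite inE => /eqP. Qed.

Lemma deg3 (T : {set 'I_n}) v : v \in T ->
  induced_3colorable E (T :\ v) -> ~~ induced_3colorable E T ->
  (3 <= #|[set e in E :&: inside T | v \in e]|)%N.
Proof.
move=> vT /existsP [f /forall_inP Hf] nc.
rewrite leqNgt; apply/negP => Hlt.
set N := [set u in T | [set u; v] \in E].
have uv u : u \in N -> u != v.
  rewrite inE => /andP [_ H]; apply/negP => /eqP Huv; move: H; rewrite Huv setUid.
  by move/E2; rewrite cards1.
have HN : (#|N| <= 2)%N.
  rewrite -ltnS; apply: leq_ltn_trans Hlt.
  rewrite -(@card_in_imset _ _ (fun u => [set u; v])); last first.
    move=> u w Nu Nw /setP H; have := H u; rewrite !inE eqxx /= => /esym /orP [/eqP //|/eqP Huv].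
    by move: (uv u Nu); rewrite Huv eqxx.
  apply: subset_leq_card; apply/fintype.subsetP => e /imsetP [u Nu ->].
  move: (Nu); rewrite inE => /andP [uT uvE].
  rewrite !inE uvE /= eqxx orbT andbT.
  have := fintype.subsetP Epairs _ uvE; rewrite inE => -> /=.
  by apply/fintype.subsetP => w; rewrite !inE => /orP [] /eqP ->.
have [c cN] : exists c, c \notin f @: N.
  apply/existsP; rewrite -negb_forall; apply/negP => /forallP Hall.
  have : (#|'I_3| <= #|f @: N|)%N by apply: subset_leq_card; apply/fintype.subsetP => x _; exact: Hall.
  rewrite card_ord => H3; have := leq_trans H3 (leq_trans (leq_imset_card _ _) HN).
  by [].
apply/negP: nc; apply/negPn/existsP; exists [ffun x => if x == v then c else f x].
apply/forall_inP => u uT; apply/forall_inP => w wT; apply/implyP => uwE.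
rewrite !ffunE.
have [Huv|Huv] := eqVneq u v; have [Hwv|Hwv] := eqVneq w v.
- by move: uwE; rewrite Huv Hwv setUid => /E2; rewrite cards1.
- have wN : w \in N by rewrite inE wT -Huv setUC.
  by apply/eqP => Hc; move: cN; rewrite Hc imset_f.
- have uN : u \in N by rewrite inE uT -Hwv.
  by apply/eqP => Hc; move: cN; rewrite -Hc imset_f.
- have := Hf u; rewrite !inE Huv uT => /(_ isT) /forall_inP /(_ w).
  by rewrite !inE Hwv wT => /(_ isT) /implyP; apply.
Qed.

Lemma handshake (T : {set 'I_n}) :
  (\sum_(v in T) #|[set e in E :&: inside T | v \in e]| = 2 * #|E :&: inside T|)%N.
Proof.
transitivity (\sum_(v in T) \sum_(e in E :&: inside T) (v \in e : nat))%N.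
  apply: eq_bigr => v _; rewrite -sum1_card big_mkcond [RHS]big_mkcond /=.
  by apply: eq_bigr => e _; rewrite inE; case: (e \in _); case: (v \in e).
rewrite exchange_big /= mulnC -sum_nat_const.
apply: eq_bigr => e; rewrite !inE => /andP [eE /andP [_ eT]].
rewrite -(E2 eE) -sum1_card big_mkcond [RHS]big_mkcond /=.
apply: eq_bigr => v _; case vE: (v \in e) => //=.
  by rewrite (fintype.subsetP eT).
by case: (v \in T).
Qed.

Lemma crit S : ~~ induced_3colorable E S -> exists T : {set 'I_n},
  [/\ T \subset S, T != set0 & (3 * #|T| <= 2 * #|E :&: inside T|)%N].
Proof.
move=> nS.
have P0 : (S \subset S) && ~~ induced_3colorable E S by rewrite subxx.
case: (@arg_minnP _ S (fun T => (T \subset S) && ~~ induced_3colorable E T) (fun T => #|T|) P0).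
move=> T /andP [TS nT] Hmin.
exists T; split => //.
  by apply: contraNneq nT => ->; apply: col0.
rewrite -handshake mulnC -sum_nat_const.
apply: leq_sum => v vT; apply: deg3 => //.
apply: contraT => nTv.
have := Hmin (T :\ v); rewrite nTv andbT.
rewrite (subset_trans (subsetDl T [set v]) TS) => /(_ isT).
by rewrite (cardsD1 v T) vT ltnn.
Qed.
End Comb.

Section RealB.
Variable R : realType.
Local Notation e := (expR (1 : R)).

Lemma eq_ler (x y : R) : x = y -> x <= y.
Proof. by move=> ->. Qed.

Lemma e_ge1 : 1 <= e.
Proof. by have := expR_ge1Dx (1 : R); apply: le_trans; rewrite lerDl. Qed.

Lemma aux_pow k : ((k.+1)%:R : R) ^+ k <= e * (k%:R) ^+ k.
Proof.
case: k => [|k]; first by rewrite !expr0 mulr1 e_ge1.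
have k0 : (0 : R) < k.+1%:R by rewrite ltr0n.
have H1 : (k.+2%:R : R) <= k.+1%:R * expR (k.+1%:R^-1).
  have := expR_ge1Dx (k.+1%:R^-1 : R).
  move=> H; apply: le_trans (ler_wpM2l (ltW k0) H).
  by rewrite mulrDr mulr1 mulfV ?gt_eqF // -natr1.
apply: le_trans (lerXn2r k.+1 _ _ H1) _; rewrite ?nnegrE ?ler0n //.
by rewrite exprMn -expRM_natl mulfV ?gt_eqF // mulrC.
Qed.

Lemma fact_bound k : (k%:R : R) ^+ k <= e ^+ k * (k`!)%:R.
Proof.
elim: k => [|k IH]; first by rewrite !expr0 mul1r.
rewrite exprS factS natrM.
have := aux_pow k => H.
apply: le_trans (ler_wpM2l (ler0n _ _) H) _.
have H2 := ler_wpM2l (ler0n R k.+1) (ler_wpM2l (expR_ge0 1) IH).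
apply: (le_trans H2); rewrite le_eqVlt; apply/orP; left; apply/eqP; rewrite exprS; ring.
Qed.

Lemma ffact_leq m k : (m ^_ k <= m ^ k)%N.
Proof.
elim: k m => [|k IH] m //; rewrite ffactnS expnS leq_mul //.
apply: leq_trans (IH _) _; case: k {IH} => // k; rewrite leq_exp2r //; exact: leq_pred.
Qed.

Lemma binom_bound m k : ('C(m, k)%:R : R) * k%:R ^+ k <= e ^+ k * m%:R ^+ k.
Proof.
apply: le_trans (ler_wpM2l (ler0n _ _) (fact_bound k)) _.
rewrite mulrCA; apply: ler_wpM2l; first exact: exprn_ge0 (expR_ge0 _).
by rewrite -natrM bin_ffact -natrX ler_nat ffact_leq.
Qed.

Lemma R1 m t k (p : R) : (m <= t * t)%N -> (3 * t <= 2 * k)%N -> (0 < k)%N ->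
  0 <= p -> 'C(m, k)%:R * p ^+ k <= (e * t%:R * p) ^+ k.
Proof.
move=> Hm Htk k0 p0.
have tk : (m <= t * k)%N by apply: leq_trans Hm _; rewrite leq_mul2l; apply/orP; right; lia.
rewrite exprMn; apply: ler_wpM2r; first exact: exprn_ge0.
have kk : (0 : R) < k%:R ^+ k by rewrite exprn_gt0 // ltr0n.
rewrite -(ler_pM2r kk).
apply: le_trans (binom_bound m k) _.
rewrite exprMn -mulrA -[t%:R ^+ k * _]exprMn -natrM; apply: ler_wpM2l; first exact: exprn_ge0 (expR_ge0 _).
by apply: lerXn2r; rewrite ?nnegrE ?ler0n // ler_nat.
Qed.

Lemma R3 n t k (p G2 : R) : (1 <= t)%N -> (t <= n)%N -> (3 * t <= 2 * k)%N ->
  0 <= p -> G2 <= 1 -> e ^+ 5 * n%:R ^+ 2 * t%:R * p ^+ 3 <= G2 ->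
  'C(n, t)%:R * (e * t%:R * p) ^+ k <= Num.sqrt G2 ^+ t.
Proof.
move=> t1 tn tk p0 G21 HG.
set x := e * t%:R * p.
have e0 : 0 <= e := expR_ge0 1.
have x0 : 0 <= x by rewrite /x !mulr_ge0 ?ler0n.
have ex : x ^+ 3 = e ^+ 3 * t%:R ^+ 2 * (t%:R * p ^+ 3).
  by rewrite /x; ring.
have Hx3 : x ^+ 3 <= e ^+ 5 * n%:R ^+ 2 * t%:R * p ^+ 3.
  have H1 : e ^+ 3 * t%:R ^+ 2 <= e ^+ 5 * n%:R ^+ 2.
    apply: ler_pM; rewrite ?exprn_ge0 ?ler0n //.
      exact: (ler_weXn2l e_ge1 (isT : (3 <= 5)%N)).
    by apply: lerXn2r; rewrite ?nnegrE ?ler0n // ler_nat.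
  have H2 := ler_wpM2r (mulr_ge0 (ler0n R t) (exprn_ge0 3 p0)) H1.
  rewrite ex; apply: le_trans H2 _; apply: eq_ler; ring.
have G20 : 0 <= G2 by apply: le_trans HG; apply: le_trans Hx3; exact: exprn_ge0.
have x1 : x <= 1.
  by rewrite -((expr_lte1 R).1 3 x isT x0); apply: le_trans G21; apply: le_trans HG.
have Hxk : x ^+ (2 * k) <= x ^+ (3 * t) by apply: ler_wiXn2l.
have HC := binom_bound n t.
have tt0 : (0 : R) < (t%:R ^+ t) ^+ 2 by rewrite !exprn_gt0 // ltr0n.
rewrite -(ler_pXn2r (isT : (0 < 2)%N)); rewrite ?nnegrE ?mulr_ge0 ?exprn_ge0 ?ler0n ?sqrtr_ge0 //.
rewrite -exprM mulnC exprM sqr_sqrtr //.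
rewrite -(ler_pM2r tt0).
have -> : ('C(n, t)%:R * x ^+ k) ^+ 2 * (t%:R ^+ t) ^+ 2 =
          ('C(n, t)%:R * t%:R ^+ t) ^+ 2 * x ^+ (2 * k).
  by rewrite mulnC exprM; ring.
apply: le_trans (_ : (e ^+ t * n%:R ^+ t) ^+ 2 * x ^+ (3 * t) <= _).
  apply: ler_pM; rewrite ?exprn_ge0 ?mulr_ge0 ?ler0n //.
  by apply: lerXn2r; rewrite ?nnegrE ?mulr_ge0 ?exprn_ge0 ?ler0n.
have -> : (e ^+ t * n%:R ^+ t) ^+ 2 * x ^+ (3 * t) =
  ((t%:R ^+ 2) * (e ^+ 5 * n%:R ^+ 2 * t%:R * p ^+ 3)) ^+ t.
  have A1 : (e ^+ t * n%:R ^+ t) ^+ 2 = ((e * n%:R) ^+ 2) ^+ t.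
    by rewrite -exprMn -!exprM mulnC.
  have A2 : x ^+ (3 * t) = (x ^+ 3) ^+ t by rewrite exprM.
  rewrite A1 A2 -exprMn; congr (_ ^+ t); rewrite /x; ring.
rewrite exprMn -exprM mulnC exprM mulrC.
apply: ler_wpM2r; first by rewrite !exprn_ge0 ?ler0n.
apply: lerXn2r; rewrite ?nnegrE //.
by apply: le_trans Hx3; apply: exprn_ge0.
Qed.

Lemma geo (G : R) N : 0 <= G -> 2 * G <= 1 -> \sum_(t < N) G ^+ t.+1 <= 2 * G.
Proof.
move=> G0 G1.
suff : \sum_(t < N) G ^+ t.+1 <= 2 * G - 2 * G ^+ N.+1.
  by move=> H; apply: le_trans H _; rewrite lerBlDr lerDl mulr_ge0 ?exprn_ge0.
elim: N => [|N IH]; first by rewrite big_ord0 expr1 subrr.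
rewrite big_ord_recr /=.
have H : 2 * G ^+ N.+2 <= G ^+ N.+1.
  by rewrite exprS mulrA; apply: ler_piMl; rewrite ?exprn_ge0.
lra.
Qed.
End RealB.

Lemma card_inside n (T : {set 'I_n}) : (#|inside T| <= #|T| * #|T|)%N.
Proof.
rewrite -cardsX.
apply: leq_trans (leq_imset_card (fun x : 'I_n * 'I_n => [set x.1; x.2]) (setX T T)).
apply: subset_leq_card; apply/fintype.subsetP => e; rewrite !inE => /andP [He eT].
move/cards2P: He => [x [y [_ exy]]].
apply/imsetP; exists (x, y) => //.
by rewrite !inE /= !(fintype.subsetP eT) // exy !inE eqxx ?orbT.
Qed.

Lemma pick_sub (T : finType) (A : {set T}) k : (k <= #|A|)%N ->
  exists2 F : {set T}, F \subset A & #|F| = k.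
Proof.
move=> kA; exists [set x in take k (enum A)].
  apply/fintype.subsetP => x; rewrite inE => /mem_take; by rewrite mem_enum.
rewrite cardsE; apply/eqP; rewrite (card_uniqP (take_uniq _ (enum_uniq _))).
rewrite size_take -cardE; case: ltnP => // H; rewrite eqn_leq H kA //.
Qed.

Section Prob.
Variables (R : realType) (n : nat) (p c : R).
Hypotheses (p0 : 0 <= p) (p1 : p <= 1).
Let M := c * Num.sqrt (n%:R : R).
Let w (E : {set {set 'I_n}}) := p ^+ #|E| * (1 - p) ^+ (#|pairs n| - #|E|).
Definition kk t := ((3 * t).+1 %/ 2)%N.
Let good (T : {set 'I_n}) := (T != set0) && (#|T|%:R <= M).
Let FF (T : {set 'I_n}) := [set F : {set {set 'I_n}} | F \subset inside T & #|F| == kk #|T|].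

Lemma w_ge0 E : 0 <= w E.
Proof. by rewrite /w mulr_ge0 ?exprn_ge0 // subr_ge0. Qed.

Lemma compl (P : {set {set 'I_n}} -> bool) :
  1 - gnp_prob p P = \sum_(E in powerset (pairs n) | ~~ P E) w E.
Proof.
have := sumw1 (pairs n) p; rewrite (bigID P) /= => <-.
by rewrite /gnp_prob addrAC subrr add0r.
Qed.

Lemma cover E : E \in powerset (pairs n) -> ~~ small_sets_3colorable c E ->
  1 <= \sum_(T | good T) \sum_(F in FF T) ((F \subset E)%:R : R).
Proof.
rewrite powersetE => Ep /forallPn [S]; rewrite negb_imply => /andP [HS nS].
have [T [TS T0 HT]] := crit Ep nS.
have kT : (kk #|T| <= #|E :&: inside T|)%N by rewrite /kk; lia.
have [F FE cF] := pick_sub kT.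
have gT : good T.
  rewrite /good T0 /=; apply: le_trans HS; rewrite ler_nat; exact: subset_leq_card.
rewrite (bigD1 T) //= (bigD1 F) /=; last first.
  by rewrite inE cF eqxx andbT (subset_trans FE) // subsetIr.
have -> : F \subset E by apply: subset_trans FE (subsetIl _ _).
rewrite -addrA lerDl addr_ge0 // sumr_ge0 // => i _; rewrite ?sumr_ge0 // => j _; exact: ler0n.
Qed.

Lemma UB : 1 - gnp_prob p (@small_sets_3colorable R c n) <=
  \sum_(T | good T) 'C(#|inside T|, kk #|T|)%:R * p ^+ kk #|T|.
Proof.
rewrite compl.
apply: le_trans (_ : _ <= \sum_(E in powerset (pairs n))
   w E * \sum_(T | good T) \sum_(F in FF T) ((F \subset E)%:R : R)) _.
  rewrite [X in _ <= X](bigID (fun E => ~~ small_sets_3colorable c E)) /=.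
  rewrite -[X in X <= _]addr0; apply: lerD.
    apply: ler_sum => E /andP [Ep nP].
    by rewrite -{1}[w E]mulr1; apply: ler_wpM2l; [exact: w_ge0| exact: cover].
  apply: sumr_ge0 => E _; apply: mulr_ge0; first exact: w_ge0.
  by apply: sumr_ge0 => T _; apply: sumr_ge0 => F _; exact: ler0n.
apply: eq_ler.
transitivity (\sum_(E in powerset (pairs n)) \sum_(T | good T) \sum_(F in FF T)
   w E * ((F \subset E)%:R : R)).
  apply: eq_bigr => E _; rewrite big_distrr; apply: eq_bigr => T _.
  by rewrite big_distrr.
rewrite exchange_big; apply: eq_bigr => T _.
rewrite exchange_big /=.
transitivity (\sum_(F in FF T) p ^+ kk #|T|).
  apply: eq_bigr => F; rewrite inE => /andP [Fi /eqP cF].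
  rewrite -cF -(@sumwF _ _ (pairs n) F p); last first.
    apply: subset_trans Fi _; apply/fintype.subsetP => e; rewrite inE; by case/andP.
  by [].
by rewrite sumr_const /FF cards_draws mulr_natl.
Qed.

Lemma group (h : nat -> R) :
  \sum_(T | good T) h #|T| =
  \sum_(t < n.+1) (if (0 < t)%N && ((t : nat)%:R <= M) then 'C(n, t)%:R * h t else 0).
Proof.
rewrite (partition_big (fun T : {set 'I_n} => (inord #|T| : 'I_n.+1)) predT) //=.
apply: eq_bigr => t _.
have E1 : forall T : {set 'I_n}, (good T && (inord #|T| == t)) =
    (#|T| == t) && ((0 < t)%N && ((t : nat)%:R <= M)).
  move=> T; rewrite /good.
  have cT : (#|T| < n.+1)%N by rewrite ltnS; apply: leq_trans (max_card _) _; rewrite card_ord.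
  have -> : (inord #|T| == t) = (#|T| == t).
    by rewrite -(inj_eq val_inj) /= inordK.
  case: (#|T| =P t) => [<-|] /=; last by rewrite andbF.
  by rewrite andbT -card_gt0.
rewrite (eq_bigl _ _ E1).
case: ifP => Hc; last by rewrite big_pred0 // => T; rewrite andbF.
rewrite (eq_bigl (fun T : {set 'I_n} => #|T| == t)); last by move=> T; rewrite andbT.
transitivity (\sum_(T : {set 'I_n} | #|T| == t) h t).
  by apply: eq_bigr => T /eqP ->.
rewrite sumr_const mulr_natl.
have H := card_draws 'I_n t; rewrite card_ord in H; rewrite -H.
by congr (_ *+ _); apply: eq_card => T; rewrite inE.
Qed.

Lemma final_bound : 0 <= c ->
  4 * (expR 1 ^+ 5 * n%:R ^+ 2 * M * p ^+ 3) <= 1 ->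
  1 - gnp_prob p (@small_sets_3colorable R c n) <=
  2 * Num.sqrt (expR 1 ^+ 5 * n%:R ^+ 2 * M * p ^+ 3).
Proof.
set G2 := expR 1 ^+ 5 * n%:R ^+ 2 * M * p ^+ 3 => c0 G24.
have M0 : 0 <= M by rewrite /M mulr_ge0 ?sqrtr_ge0.
have G20 : 0 <= G2 by rewrite /G2 !mulr_ge0 ?exprn_ge0 ?expR_ge0 ?ler0n.
have G21 : G2 <= 1 by lra.
have sG0 : 0 <= Num.sqrt G2 := sqrtr_ge0 _.
have sG : 2 * Num.sqrt G2 <= 1.
  rewrite -(ler_pXn2r (isT : (0 < 2)%N)) ?nnegrE ?mulr_ge0 // exprMn sqr_sqrtr //.
  by rewrite expr1n; apply: le_trans G24; apply: eq_ler; ring.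
apply: le_trans (UB) _.
apply: le_trans (_ : _ <= \sum_(T | good T) (expR 1 * #|T|%:R * p) ^+ kk #|T|) _.
  apply: ler_sum => T /andP [T0 _].
  have t0 : (0 < #|T|)%N by rewrite card_gt0.
  apply: R1 => //; first exact: card_inside.
    by rewrite /kk; lia.
  by rewrite /kk; lia.
rewrite (group (fun t => (expR 1 * t%:R * p) ^+ kk t)).
apply: le_trans (_ : _ <= \sum_(t < n.+1) (if (0 < t)%N then Num.sqrt G2 ^+ t else 0)) _.
  apply: ler_sum => t _; case: ifP => [/andP [t0 tM]|_].
    rewrite t0; apply: R3 => //.
    - by rewrite -ltnS.
    - by rewrite /kk; lia.
    - apply: ler_wpM2r; first exact: exprn_ge0.
      apply: ler_wpM2l => //; by rewrite mulr_ge0 ?exprn_ge0 ?expR_ge0 ?ler0n.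
  by case: ifP => // _; exact: exprn_ge0.
rewrite big_ord_recl /= add0r.
rewrite (eq_bigr (fun i : 'I_n => Num.sqrt G2 ^+ i.+1)) //.
exact: geo.
Qed.
End Prob.

Section Asym.
Variable R : realType.

Lemma ev (b K d : R) : 0 < b -> 0 < K -> 0 < d ->
  \forall m \near \oo%classic, K * ((m%:R : R) `^ (- b)) < d.
Proof.
move=> b0 K0 d0.
set Y := (d / K) `^ (- b^-1).
have Y0 : 0 < Y by rewrite powR_gt0 // divr_gt0.
near=> m.
have mY : Y < m%:R by near: m; exact: nbhs_infty_gtr.
have m0 : (0 : R) < m%:R by apply: lt_trans mY.
have H := gt0_ltr_powR b0 (ltW Y0) (ltW m0) mY.
have HY : Y `^ b = K / d.
  rewrite /Y -powRrM mulNr mulVf ?gt_eqF // powR_inv1 ?invf_div //.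
  by rewrite ltW // divr_gt0.
rewrite HY in H.
rewrite powRN -ltr_pdivlMl // mulrC -invf_div ltf_pV2 ?posrE ?divr_gt0 ?powR_gt0 //.
Unshelve. all: by end_near.
Qed.
End Asym.

Local Open Scope classical_set_scope.
Unset Implicit Arguments.

Theorem mainTheorem1 (R : realType) (alpha c : R)
    (halpha : 5%:R / 6%:R < alpha) (hc : 0 < c) :
  (fun n : nat => gnp_prob (n%:R `^ (- alpha)) (@small_sets_3colorable R c n))
    @ \oo --> (1 : R).
Proof.
set b := 3 * alpha - 5 / 2.
have b0 : 0 < b by rewrite /b; lra.
have a0 : 0 < alpha by lra.
set K := expR 1 ^+ 5 * c.
have K0 : 0 < K by rewrite /K mulr_gt0 ?exprn_gt0 ?expR_gt0.
apply/cvgrPdist_lt => eps eps0.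
set d := Num.min (4^-1) (eps ^+ 2 / 8).
have d0 : 0 < d.
  by rewrite /d lt_min; apply/andP; split; [rewrite invr_gt0 | rewrite divr_gt0 ?exprn_gt0].

near=> m.
have m1 : (1 <= m)%N by near: m; exact: nbhs_infty_ge.
have HG : K * (m%:R : R) `^ (- b) < d by near: m; exact: ev.
set x : R := m%:R.
have x0 : 0 < x by rewrite /x ltr0n.
have x1 : 1 <= x by rewrite /x ler1n.
set p := x `^ (- alpha).
have p0 : 0 <= p := powR_ge0 _ _.
have p1 : p <= 1.
  rewrite /p -(powRr0 x); apply: ler_powR => //; lra.
have EG : expR 1 ^+ 5 * x ^+ 2 * (c * Num.sqrt x) * p ^+ 3 = K * x `^ (- b).
  rewrite -(powR_mulrn 2 (ltW x0)) -powR12_sqrt ?(ltW x0) //.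
  rewrite -(powR_mulrn 3 p0) /p -powRrM.
  have -> : x `^ (- b) = x `^ 2%:R * x `^ (2^-1) * x `^ (- alpha * 3%:R).
    rewrite -!powRD; try by rewrite (gt_eqF x0) implybT.
    by f_equal; rewrite /b; field.
  by rewrite /K; ring.
have HG2 : 4 * (expR 1 ^+ 5 * x ^+ 2 * (c * Num.sqrt x) * p ^+ 3) <= 1.
  rewrite EG; have : d <= 4^-1 by rewrite /d ge_min lexx.
  lra.
have HG3 : 4 * (expR 1 ^+ 5 * x ^+ 2 * (c * Num.sqrt x) * p ^+ 3) < eps ^+ 2.
  rewrite EG; have : d <= eps ^+ 2 / 8 by rewrite /d ge_min lexx orbT.
  have := exprn_gt0 2 eps0; lra.
have FB := @final_bound R m p c p0 p1 (ltW hc) HG2.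
have C0 : 0 <= 1 - gnp_prob p (@small_sets_3colorable R c m).
  rewrite compl //; apply: sumr_ge0 => E _; apply: mulr_ge0; rewrite exprn_ge0 // subr_ge0 //.
rewrite ger0_norm //.
apply: le_lt_trans FB _.
rewrite -(ltr_pXn2r (isT : (0 < 2)%N)) ?nnegrE ?mulr_ge0 ?sqrtr_ge0 ?(ltW eps0) //.
rewrite exprMn sqr_sqrtr; last by rewrite EG mulr_ge0 ?powR_ge0 ?(ltW K0).
lra.
Unshelve. all: by end_near.
Qed.
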